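(* Let $\mathcal H_k$ be a family of $k$-wise independent functions $[n]\to[n]$ with $k\ge 2\log n$. Let $t<n/2$, let $j=\lfloor \log(n/2t)\rfloor$, and let $T=\{x_1,\dots,x_t\}\subseteq[n]$ be a set of $t$ distinct cards (the cards remaining in the deck, with $x_1$ the next card to be drawn). For $h\in\mathcal H_k$ let $S^h_j=\{x\in[n] : 2^{j-1} < h(x)\le 2^j\}$. Then $$\Pr_{h\sim\mathcal H_k}\Big[S^h_j\cap T=\{x_1\}\ \Big|\ |S^h_j\cap T|=1\Big]\ \ge\ \frac{1}{t+o(1)},$$ where $o(1)\to 0$ as $n\to\infty$.
   Context: A family $\mathcal H_k$ of functions $h:[n]\to[n]$ is $k$-wise independent if for every $k$ distinct $x_1,\dots,x_k\in[n]$ and every $y_1,\dots,y_k\in[n]$, $\Pr_{h\sim\mathcal H_k}[(h(x_1),\dots,h(x_k))=(y_1,\dots,y_k)]=n^{-k}$. $\log$ is base 2. *)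

(* Defs.v *)
From mathcomp Require Import all_boot all_order all_algebra.
Set Implicit Arguments. Unset Strict Implicit. Unset Printing Implicit Defensive.
Import Order.TTheory GRing.Theory Num.Theory.
Local Open Scope ring_scope.

(* [n] = {1,...,n} is modelled by 'I_n = {0,...,n-1}; the element y : 'I_n
   stands for the number y+1 in [n].  A family of functions [n] -> [n] is a
   finite index type I with H : I -> {ffun 'I_n -> 'I_n}; h ~ H means
   i uniform on I, h = H i (a multiset of functions, uniform distribution). *)

Definition prH (n : nat) (I : finType) (H : I -> {ffun 'I_n -> 'I_n})
    (E : {ffun 'I_n -> 'I_n} -> bool) : rat :=
  #|[set i | E (H i)]|%:R / #|I|%:R.

Definition condprH (n : nat) (I : finType) (H : I -> {ffun 'I_n -> 'I_n})
    (A B : {ffun 'I_n -> 'I_n} -> bool) : rat :=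
  prH H (fun h => A h && B h) / prH H B.

Definition kwise_indep (n k : nat) (I : finType)
    (H : I -> {ffun 'I_n -> 'I_n}) : Prop :=
  forall (xs ys : k.-tuple 'I_n), uniq xs ->
    prH H (fun h => [forall i : 'I_k, h (tnth xs i) == tnth ys i])
      = 1 / (n%:R ^+ k).

(* S^h_j = { x in [n] : 2^(j-1) < h(x) <= 2^j }, with h(x) read as the
   number (h x).+1 in [n]; 2^(j-1) < v is written 2^j < 2 v (exact, also j=0) *)
Definition Sj (n j : nat) (h : {ffun 'I_n -> 'I_n}) : {set 'I_n} :=
  [set x | (2 ^ j < 2 * (h x).+1)%N && ((h x).+1 <= 2 ^ j)%N].

(* Main.v *)
Require Import Defs.
From mathcomp Require Import all_boot all_order all_algebra.
From mathcomp Require Import ring lra zify.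
Import Order.TTheory GRing.Theory Num.Theory.
Set Implicit Arguments. Unset Strict Implicit. Unset Printing Implicit Defensive.
Local Open Scope ring_scope.

Section Count.
Variables (n : nat) (I : finType) (H : I -> {ffun 'I_n -> 'I_n}).

Lemma cnt_sum (T : finType) (P : pred T) : #|[set i | P i]| = (\sum_i P i)%N.
Proof.
rewrite -sum1_card big_mkcond /=; apply eq_bigr => i _; rewrite inE; by case: (P i).
Qed.

Lemma kw_count k (xs ys : k.-tuple 'I_n) : kwise_indep k H -> uniq xs -> (0 < n ^ k)%N ->
  (#|[set i | [forall l, H i (tnth xs l) == tnth ys l]]| * n ^ k = #|I|)%N.
Proof.
move=> hk hu hn; have := hk xs ys hu; rewrite /prH.
set c := #|_|.
have cle : (c <= #|I|)%N by rewrite /c; apply: max_card.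
case N0: (#|I| == 0)%N.
  move/eqP: N0 => N0; move: cle; rewrite N0 leqn0 => /eqP ->; by rewrite mul0n.
move=> e; apply/eqP; rewrite -(eqr_nat rat) natrM.
have hN : (#|I|%:R : rat) != 0 by rewrite pnatr_eq0 N0.
have hK : ((n ^ k)%:R : rat) != 0 by rewrite pnatr_eq0 -lt0n.
move: hK e; rewrite natrX => hK e.
have -> : (c%:R : rat) = #|I|%:R / (n%:R ^+ k) by rewrite -[c%:R](mulfVK hN) e; field.
apply/eqP; field; done.
Qed.

Lemma kw_family k (W' : {set 'I_n}) (F : 'I_n -> {set 'I_n}) :
  kwise_indep k H -> #|W'| = k ->
  (#|[set i | [forall y in W', H i y \in F y]]| * n ^ k
     = #|I| * \prod_(y in W') #|F y|)%N.
Proof.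
move=> hk hW.
have hn : (0 < n ^ k)%N.
  have : (#|W'| <= n)%N by rewrite -[X in (_ <= X)%N](card_ord n) max_card.
  rewrite hW expn_gt0; case: (posnP n) => [->|np]; last by move=> _; apply/orP; left. by rewrite leqn0 => /eqP ->.
subst k.
pose xs := Tuple (enum_tupleP W').
have hu : uniq xs by exact: enum_uniq.
pose G := fun l => F (tnth xs l).
have E : forall f : {ffun 'I_#|W'| -> 'I_n},
   (#|[set i | [forall l, H i (tnth xs l) == f l]]| * n ^ #|W'| = #|I|)%N.
  move=> f; rewrite -(kw_count (mktuple f) hk hu hn); congr (_ * _)%N.
  apply: eq_card => i; rewrite !inE; apply: eq_forallb => l; by rewrite tnth_mktuple.
have C : #|[set i | [forall y in W', H i y \in F y]]|
     = (\sum_(f in family G) #|[set i | [forall l, H i (tnth xs l) == f l]]|)%N.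
  under eq_bigr => f _ do rewrite (cnt_sum (fun i => [forall l, H i (tnth xs l) == f l])).
  rewrite (cnt_sum (fun i => [forall y in W', H i y \in F y])).
  idtac.
  rewrite exchange_big /=; apply eq_bigr => i _.
  pose g := [ffun l => H i (tnth xs l)].
  have Eg : forall f : {ffun 'I_#|W'| -> 'I_n},
     [forall l, H i (tnth xs l) == f l] = (f == g).
    move=> f; apply/forallP/eqP => [h|->]; last by move=> l; rewrite ffunE.
    by apply/ffunP => l; rewrite ffunE; apply/esym/eqP/h.
  under eq_bigr do rewrite Eg.
  have -> : [forall y in W', H i y \in F y] = (g \in family G).
    apply/forall_inP/familyP => [h l|h y yW].
      by rewrite ffunE /G; apply: h; have := mem_tnth l xs; rewrite /= mem_enum.
    have : y \in xs by rewrite /xs /= mem_enum.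
    case/tnthP => l ->; have := h l; by rewrite ffunE.
  case: (boolP (g \in family G)) => hg.
    by rewrite (bigD1 g) //= eqxx big1 ?addn0 // => f /andP[_ /negPf ->].
  by rewrite big1 // => f hf; case: eqP => // efg; move: hg; rewrite -efg hf.
rewrite C big_distrl /=; under eq_bigr do rewrite E.
rewrite sum_nat_const mulnC card_family foldrE big_map big_enum /=.
congr (_ * _)%N; rewrite /G -(big_tuple _ _ xs predT (fun y => #|F y|)) /=.
by rewrite big_enum.
Qed.

Lemma extend_set (d : nat) (W : {set 'I_n}) : (#|W| + d <= n)%N ->
  exists W' : {set 'I_n}, W \subset W' /\ #|W'| = (#|W| + d)%N.
Proof.
elim: d W => [|d IH] W hd; first by exists W; rewrite addn0.
have /properP [_ [y _ yW]] : W \proper [set: 'I_n].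
  rewrite properT; apply/eqP => eW; move: hd; rewrite eW cardsT card_ord; lia.
have [W' [s1 c1]] : exists W' : {set 'I_n}, (y |: W) \subset W' /\ #|W'| = (#|y |: W| + d)%N.
  apply: IH; rewrite cardsU1 yW; lia.
exists W'; split; first by apply: subset_trans s1; apply: subsetUr.
by rewrite c1 cardsU1 yW; lia.
Qed.

Lemma kw_sub k (W V : {set 'I_n}) : kwise_indep k H -> (#|W| <= k)%N -> (k <= n)%N ->
  (#|[set i | [forall y in W, H i y \in V]]| * n ^ #|W| = #|I| * #|V| ^ #|W|)%N.
Proof.
move=> hk hWk hkn.
have [W' [sW cW]] := extend_set (d := k - #|W|) (W := W) ltac:(lia).
have cW' : #|W'| = k by rewrite cW; lia.
have := @kw_family k W' (fun y => if y \in W then V else setT) hk cW'.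
have -> : [set i | [forall y in W', H i y \in (if y \in W then V else setT)]]
        = [set i | [forall y in W, H i y \in V]].
  apply/setP => i; rewrite !inE; apply/forall_inP/forall_inP => h y hy.
    by have := h y (subsetP sW y hy); rewrite hy.
  by case: ifP => hyW; [apply: h | rewrite inE].
rewrite (bigID (mem W)) /=.
rewrite (eq_bigr (fun _ => #|V|)); last by move=> y /andP[_ ->].
rewrite [X in (_ * (_ * X))%N](eq_bigr (fun _ => n)); last first.
  by move=> y /andP[_ /negPf ->]; rewrite cardsT card_ord.
rewrite !prod_nat_const.
have -> : #|[pred y | (y \in W') && (y \in W)]| = #|W|.
  apply: eq_card => y; rewrite !inE; apply/andP/idP => [[]//|h]; split => //.
  exact: (subsetP sW).
have -> : #|[pred y | (y \in W') && ~~ (y \in W)]| = (k - #|W|)%N.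
  rewrite -cW' -(cardsID W W') (setIidPr sW).
  have -> : #|[pred y | (y \in W') && ~~ (y \in W)]| = #|W' :\: W|.
    by apply: eq_card => y; rewrite !inE andbC.
  lia.
have hnp : (0 < n ^ (k - #|W|))%N.
  rewrite expn_gt0; case: (posnP n) => [n0|np]; last by apply/orP; left. apply/orP; right; lia.
rewrite -{1}(subnKC hWk) expnD mulnA mulnA => /eqP; rewrite eqn_pmul2r //.
by move/eqP.
Qed.

Definition SV (V : {set 'I_n}) (h : {ffun 'I_n -> 'I_n}) := [set y | h y \in V].

Lemma moment k V x (T' : {set 'I_n}) i : kwise_indep k H -> x \notin T' ->
  (i.+1 <= k)%N -> (k <= n)%N ->
  ((\sum_j0 ((x \in SV V (H j0)) * 'C(#|SV V (H j0) :&: T'|, i))) * n ^ i.+1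
     = 'C(#|T'|, i) * (#|I| * #|V| ^ i.+1))%N.
Proof.
move=> hk xT hik hkn.
have P : forall h, ((x \in SV V h) * 'C(#|SV V h :&: T'|, i)
   = \sum_(U : {set 'I_n}) ((U \subset T') && (#|U| == i) && (x |: U \subset SV V h)))%N.
  move=> h; rewrite -cards_draws cnt_sum big_distrr /=; apply eq_bigr => U _.
  rewrite subsetI subUset sub1set.
  by case: (x \in _); case: (U \subset SV V h); case: (U \subset T'); case: (#|U| == i).
under eq_bigr do rewrite P.
rewrite exchange_big big_distrl /=.
have Q : forall U : {set 'I_n},
   ((\sum_j0 ((U \subset T') && (#|U| == i) && (x |: U \subset SV V (H j0)))) * n ^ i.+1
    = ((U \subset T') && (#|U| == i)) * (#|I| * #|V| ^ i.+1))%N.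
  move=> U; case hc: ((U \subset T') && (#|U| == i)); last first.
    by rewrite big1 ?mul0n // => j0 _; rewrite hc.
  move/andP: hc => [hUT /eqP hUi].
  have cx : #|x |: U| = i.+1.
    rewrite cardsU1 hUi; have -> : x \notin U by apply: contra xT; apply: (subsetP hUT).
    by [].
  rewrite mul1n -cx -(@kw_sub k (x |: U) V hk ltac:(lia) hkn) cnt_sum.
  congr (_ * _)%N; apply: eq_bigr => j0 _ /=.
  congr (nat_of_bool _); apply/subsetP/forall_inP => h y hy.
    by have := h y hy; rewrite inE.
  by rewrite inE; apply: h.
under eq_bigr do rewrite Q.
by rewrite -big_distrl /= -cnt_sum cards_draws.
Qed.

Lemma ev_eq V (T : {set 'I_n}) x h : x \in T ->
  (SV V h :&: T == [set x]) = (x \in SV V h) && (#|SV V h :&: (T :\ x)| == 0%N).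
Proof.
move=> xT; rewrite cards_eq0 setIDA.
apply/eqP/andP => [eA|[xS /eqP eD]].
  split; last by rewrite eA setDv.
  have : x \in SV V h :&: T by rewrite eA set11.
  by rewrite inE => /andP[].
by rewrite -(@setD1K _ x (SV V h :&: T)) ?eD ?setU0 // inE xS xT.
Qed.
End Count.

Lemma bonf z r : \sum_(i < r.+1) (-1)^+i * ('C(z, i)%:R : rat)
   = (if z == 0%N then 1 else (-1)^+r * 'C(z.-1, r)%:R).
Proof.
elim: r => [|r IH]; first by rewrite big_ord1; case: ifP => _; rewrite !bin0 !expr0 !mul1r.
rewrite big_ord_recr /= IH; case: z IH => [|z] _ /=; first by rewrite bin0n mulr0 addr0.
rewrite binS natrD exprS; ring.
Qed.

Lemma bonf_odd z r : odd r -> \sum_(i < r.+1) (-1)^+i * ('C(z, i)%:R : rat) <= (z == 0%N)%:R.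
Proof.
move=> hr; rewrite bonf; case: ifP => // _.
by rewrite -signr_odd hr expr1 mulN1r oppr_le0 ler0n.
Qed.

Lemma bonf_even z r : ~~ odd r -> ((z == 0%N)%:R : rat) <= \sum_(i < r.+1) (-1)^+i * ('C(z, i)%:R : rat).
Proof.
move=> hr; rewrite bonf; case: ifP => // _.
by rewrite -signr_odd (negPf hr) expr0 mul1r ler0n.
Qed.

Section Main2.
Variables (n : nat) (I : finType) (H : I -> {ffun 'I_n -> 'I_n}).

Lemma abound k (V : {set 'I_n}) (x : 'I_n) (T : {set 'I_n}) r : kwise_indep k H -> x \in T -> (r.+1 <= k)%N -> (k <= n)%N -> (0 < n)%N ->
  let a := (#|[set j0 | SV V (H j0) :&: T == [set x]]|%:R : rat) in
  let G := #|I|%:R * \sum_(i < r.+1) (-1)^+i * 'C(#|T :\ x|, i)%:R * (#|V|%:R / n%:R)^+i.+1 in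
  (odd r -> G <= a) /\ (~~ odd r -> a <= G).
Proof.
move=> hk xT hrk hkn hn a G.
have xT' : x \notin T :\ x by rewrite !inE eqxx.
have Ea : a = \sum_j0 ((x \in SV V (H j0))%:R * ((#|SV V (H j0) :&: (T :\ x)| == 0%N)%:R)).
  rewrite /a cnt_sum natr_sum; apply eq_bigr => j0 _; rewrite ev_eq //.
  by case: (x \in _); case: (_ == 0%N); rewrite /= ?mul1r ?mul0r.
have EG : G = \sum_j0 (x \in SV V (H j0))%:R *
     \sum_(i < r.+1) (-1)^+i * ('C(#|SV V (H j0) :&: (T :\ x)|, i)%:R : rat).
  under eq_bigr do rewrite mulr_sumr.
  rewrite exchange_big /= /G mulr_sumr; apply eq_bigr => i _.
  have hik : (i.+1 <= k)%N by have := ltn_ord i; lia.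
  have M := @moment n I H k V x (T :\ x) i hk xT' hik hkn.
  under eq_bigr do rewrite mulrCA.
  rewrite -mulr_sumr.
  rewrite (eq_bigr (fun j0 => (((x \in SV V (H j0)) * 'C(#|SV V (H j0) :&: (T :\ x)|, i))%N)%:R));
    last by move=> j0 _; rewrite natrM.
  rewrite -natr_sum.
  have hn' : (n%:R : rat) ^+ i.+1 != 0 by apply: expf_neq0; rewrite pnatr_eq0 -lt0n hn.
  have -> : ((\sum_j0 ((x \in SV V (H j0)) * 'C(#|SV V (H j0) :&: (T :\ x)|, i))%N)%:R : rat)
     = 'C(#|T :\ x|, i)%:R * #|I|%:R * #|V|%:R ^+ i.+1 / n%:R ^+ i.+1.
    apply: (mulIf hn'). rewrite mulfVK // -natrX -[X in X = _]natrM M natrM natrM natrX; ring.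
  rewrite exprMn exprVn; field; by apply: expf_neq0; rewrite pnatr_eq0 -lt0n hn.
split => hr; rewrite Ea EG; apply: ler_sum => j0 _; apply: ler_wpM2l => //.
  exact: bonf_odd.
exact: bonf_even.
Qed.
End Main2.

Lemma bin_le_exp m r : ('C(m, r) <= m ^ r)%N.
Proof.
elim: r m => [|r IH] m; first by rewrite bin0 expn0.
case: m => [|m]; first by rewrite bin0n.
have e := mul_bin_diag m.+1 r; rewrite /= in e.
have h1 : ('C(m.+1, r.+1) <= r.+1 * 'C(m.+1, r.+1))%N by rewrite leq_pmull.
apply: (leq_trans h1); rewrite -e expnS leq_mul2l /=.
apply: (leq_trans (IH m)); case: r {IH h1 e} => [|r]; first by rewrite !expn0.
by rewrite leq_exp2r.
Qed.

Lemma final_alg (N a B t u p g0 D : rat) :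
  0 < N -> 0 < u -> 0 < p -> 0 <= t ->
  N * (p / 2) <= a -> N * g0 <= a -> B <= t * N * (g0 + D) ->
  t * D <= 4 * p * u -> a <= B ->
  1 / (t + 8 * u) <= a / B.
Proof.
move=> hN hu hp ht h1 h2 h3 h4 h5.
have ha : 0 < a by apply: lt_le_trans h1; apply: mulr_gt0 => //; apply: divr_gt0.
have hB : 0 < B by apply: lt_le_trans h5.
have hc : 0 < t + 8 * u by apply: ltr_pwDr => //; apply: mulr_gt0.
have key : B <= a * (t + 8 * u).
  apply: (le_trans h3).
  have e1 : t * N * g0 <= t * a by nra.
  have e2 : t * N * D <= N * (4 * p * u) by nra.
  have e3 : N * (4 * p * u) <= 8 * u * a.
    have -> : N * (4 * p * u) = 8 * u * (N * (p / 2)) by field.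
    nra.
  have -> : t * N * (g0 + D) = t * N * g0 + t * N * D by ring.
  apply: (le_trans (lerD e1 (le_trans e2 e3))).
  by rewrite mulrDr [a * t]mulrC [a * (8 * u)]mulrC.
rewrite -subr_ge0.
have -> : a / B - 1 / (t + 8 * u) = (a * (t + 8 * u) - B) / (B * (t + 8 * u)).
  by field; apply/andP; split; apply/lt0r_neq0.
by apply: divr_ge0; [rewrite subr_ge0 | apply: ltW; apply: mulr_gt0].
Qed.

Theorem mainTheorem9 :
  exists eps : nat -> rat,
    (forall e : rat, 0 < e -> exists N : nat, forall m : nat,
        (N <= m)%N -> `|eps m| <= e) /\
    forall (n k : nat) (I : finType) (H : I -> {ffun 'I_n -> 'I_n})
           (t : nat) (T : {set 'I_n}) (x1 : 'I_n),
      (n ^ 2 <= 2 ^ k)%N ->          (* k >= 2 log n *)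
      (k <= n)%N ->
      kwise_indep k H ->
      (2 * t < n)%N ->               (* t < n/2 *)
      #|T| = t -> x1 \in T ->
      let j := trunc_log 2 (n %/ (2 * t)) in   (* j = floor(log(n/2t)) *)
      1 / (t%:R + eps n) <=
        condprH H (fun h => Sj j h :&: T == [set x1])
                  (fun h => #|Sj j h :&: T| == 1%N).
Proof.
exists (fun m => 8 / m%:R); split.
  move=> e he; exists (Num.Def.archi_bound (8 / e)).+1 => m hm.
  have hb := @archi_boundP _ (8 / e) ltac:(by apply: divr_ge0; [|apply: ltW]).
  have mpos : (0 : rat) < m%:R by rewrite ltr0n; lia.
  rewrite ger0_norm; last by apply: divr_ge0; [|apply: ltW].
  rewrite ler_pdivrMr //.
  have : 8 / e <= m%:R.
    apply: ltW; apply: (lt_le_trans hb); rewrite ler_nat; lia.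
  by rewrite ler_pdivrMr // mulrC.
move=> n k I H t T x1 hnk hkn hk htn hT x1T; cbv zeta.
set j := trunc_log 2 _.
have t1 : (0 < t)%N by rewrite -hT; apply/card_gt0P; exists x1.
have n3 : (3 <= n)%N by lia.
have k4 : (4 <= k)%N.
  rewrite leqNgt; apply/negP => hk3.
  have : (2 ^ k <= 2 ^ 3)%N by apply: leq_pexp2l; lia.
  have : (9 <= n ^ 2)%N by rewrite expnS expn1; nia.
  lia.
pose P := (2 ^ j)%N.
have hP1 : (0 < P)%N by rewrite expn_gt0.
have hd : (0 < n %/ (2 * t))%N by rewrite divn_gt0; lia.
have hPd : (P <= n %/ (2 * t))%N by apply: trunc_logP.
have hdn := leq_trunc_div n (2 * t).
have h2tP : (2 * t * P <= n)%N by apply: leq_trans hdn; rewrite mulnC leq_mul2r hPd orbT.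
pose V := [set v : 'I_n | (2 ^ j < 2 * (v.+1))%N && ((v.+1) <= 2 ^ j)%N].
have ESj : forall h, Sj j h = SV V h by move=> h; apply/setP => y; rewrite !inE.
have hPn : (P <= n)%N by nia.
have V1 : (0 < #|V|)%N.
  apply/card_gt0P; have hv : (P.-1 < n)%N by lia.
  exists (Ordinal hv); rewrite inE /=; rewrite -/P; apply/andP; split; lia.
have V2 : (2 * t * #|V| <= n)%N.
  apply: leq_trans h2tP; rewrite leq_mul2l; apply/orP; right.
  have sub : V \subset [set widen_ord hPn x | x in [set: 'I_P]].
    apply/subsetP => v; rewrite inE => /andP[_ hv].
    have hv' : (v < P)%N by rewrite /P; lia.
    apply/imsetP; exists (Ordinal hv') => //; by apply: val_inj.
  apply: (leq_trans (subset_leq_card sub)); apply: (leq_trans (leq_imset_card _ _)).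
  by rewrite cardsT card_ord.
have Npos : (0 < #|I|)%N.
  have [W' [_ cW']] := @extend_set n k set0 ltac:(by rewrite cards0).
  rewrite cards0 add0n in cW'.
  have hs : size (enum W') == k by rewrite -cardE cW'.
  have := hk (Tuple hs) [tuple x1 | i < k] (enum_uniq _).
  rewrite /prH lt0n; case: eqP => // ->; rewrite invr0 mulr0 => /esym/eqP.
  rewrite div1r invr_eq0 expf_eq0 pnatr_eq0 => /andP[_ /eqP n0]; lia.
pose p : rat := #|V|%:R / n%:R.
pose Gf r := \sum_(i < r.+1) (-1)^+i * ('C(t.-1, i)%:R : rat) * p ^+ i.+1.
pose a x : rat := #|[set j0 | SV V (H j0) :&: T == [set x]]|%:R.
have AB : forall x r, x \in T -> (r.+1 <= k)%N ->
    (odd r -> #|I|%:R * Gf r <= a x) /\ (~~ odd r -> a x <= #|I|%:R * Gf r).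
  move=> x r xT hr; have := @abound n I H k V x T r hk xT hr hkn ltac:(lia).
  have -> : #|T :\ x| = t.-1 by move: (cardsD1 x T); rewrite hT xT; lia.
  by [].
pose r0 := (2 * ((k - 1) %/ 2))%N.
have r0k : (r0.+1 <= k)%N by rewrite /r0; lia.
have r0k' : (k <= r0 + 2)%N by rewrite /r0; lia.
have r02 : (2 <= r0)%N by rewrite /r0; lia.
have r0e : ~~ odd r0 by rewrite /r0 oddM.
pose r1 := r0.-1.
have r1e : r0 = r1.+1 by rewrite /r1; lia.
have r1o : odd r1 by move: r0e; rewrite r1e /=; case: (odd r1).
have L1 : #|I|%:R * Gf 1%N <= a x1 by have [h _] := AB x1 1%N x1T ltac:(lia); exact: h.
have L2 : #|I|%:R * Gf r1 <= a x1 by have [h _] := AB x1 r1 x1T ltac:(lia); exact: h.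
have U : forall x, x \in T -> a x <= #|I|%:R * Gf r0 by move=> x xT; have [_ h] := AB x r0 xT r0k; exact: h.
have G1 : Gf 1%N = p - (t.-1)%:R * p ^+ 2.
  by rewrite /Gf big_ord_recr big_ord1 /= expr0 expr1 bin0 bin1; ring.
have G0 : Gf r0 = Gf r1 + 'C(t.-1, r0)%:R * p ^+ r0.+1.
  have GS : forall r, Gf r.+1 = Gf r + (-1)^+r.+1 * ('C(t.-1, r.+1)%:R : rat) * p ^+ r.+2.
    by move=> r; rewrite /Gf big_ord_recr.
  rewrite r1e GS; congr (_ + _).
  by rewrite -signr_odd /= r1o /= expr0 mul1r.
pose Bn := #|[set j0 | #|Sj j (H j0) :&: T| == 1%N]|.
have hn' : (0 : rat) < n%:R by rewrite ltr0n; lia.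
have hp : 0 < p by apply: divr_gt0; rewrite ltr0n //; lia.
have hNr : (0 : rat) < #|I|%:R by rewrite ltr0n.
have a1B : a x1 <= Bn%:R.
  rewrite ler_nat; apply: subset_leq_card; apply/subsetP => j0; rewrite !inE ESj => /eqP ->.
  by rewrite cards1.
have Ble : (Bn <= \sum_(x in T) #|[set j0 | SV V (H j0) :&: T == [set x]]|)%N.
  under eq_bigr => x _ do rewrite (cnt_sum (fun j0 => SV V (H j0) :&: T == [set x])).
  rewrite /Bn (cnt_sum (fun j0 => #|Sj j (H j0) :&: T| == 1%N)).
  rewrite exchange_big /=; apply: leq_sum => j0 _; rewrite ESj.
  case: cards1P => [[y ey]|//].
  have : y \in SV V (H j0) :&: T by rewrite ey set11.
  rewrite inE => /andP[_ yT].
  by rewrite (bigD1 y) //= ey eqxx.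
have Bup : (Bn%:R : rat) <= t%:R * #|I|%:R * (Gf r1 + 'C(t.-1, r0)%:R * p ^+ r0.+1).
  apply: (le_trans (y := \sum_(x in T) a x)); first by rewrite /a -natr_sum ler_nat.
  apply: (le_trans (y := \sum_(x in T) (#|I|%:R * Gf r0))); first by apply: ler_sum => x xT; apply: U.
  by rewrite sumr_const hT -G0 -[_ *+ t]mulr_natl !mulrA.
have hq : (t.-1)%:R * p <= 1 / 2.
  have -> : (t.-1)%:R * p = ((t.-1 * #|V|)%:R : rat) / n%:R by rewrite /p natrM mulrA.
  rewrite ler_pdivrMr //.
  have : ((2 * (t.-1 * #|V|))%:R : rat) <= n%:R.
    rewrite ler_nat; apply: leq_trans V2; rewrite mulnA leq_mul2r; apply/orP; right; lia.
  rewrite natrM; generalize ((t.-1 * #|V|)%:R : rat) => X; lra.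
have Lp : #|I|%:R * (p / 2) <= a x1.
  apply: le_trans L1; rewrite G1; apply: ler_wpM2l; first exact: ltW.
  have : 0 <= p * (1 / 2 - (t.-1)%:R * p) by apply: mulr_ge0; [apply: ltW | lra].
  rewrite expr2; lra.
have hC : ('C(t.-1, r0)%:R : rat) <= (t.-1)%:R ^+ r0 by rewrite -natrX ler_nat bin_le_exp.
have hD1 : ('C(t.-1, r0)%:R : rat) * p ^+ r0.+1 <= (1 / 2) ^+ r0 * p.
  rewrite exprSr mulrA; apply: ler_wpM2r; first exact: ltW.
  apply: (le_trans (y := (t.-1)%:R ^+ r0 * p ^+ r0)).
    by apply: ler_wpM2r => //; apply: exprn_ge0; apply: ltW.
  rewrite -exprMn; apply: lerXn2r => //; rewrite ?nnegrE //.
  by apply: mulr_ge0 => //; apply: ltW.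
have tn : (t <= n)%N by apply: ltnW; apply: leq_ltn_trans htn; rewrite leq_pmull.
have htn2 : (t * n <= 4 * 2 ^ r0)%N.
  apply: (leq_trans (_ : t * n <= n ^ 2)%N); first by rewrite expnS expn1 leq_mul2r tn orbT.
  apply: (leq_trans hnk); rewrite mulnC -[4%N]/(2 ^ 2)%N -expnD; exact: leq_pexp2l.
have hD2 : t%:R * (1 / 2) ^+ r0 <= 4 / (n%:R : rat).
  have hQ : (0 : rat) < (2 ^ r0)%:R by rewrite ltr0n expn_gt0.
  have -> : ((1 / 2) ^+ r0 : rat) = 1 / (2 ^ r0)%:R by rewrite natrX expr_div_n expr1n.
  rewrite -subr_ge0.
  have -> : 4 / n%:R - t%:R * (1 / (2 ^ r0)%:R) = ((4 * 2 ^ r0)%:R - (t * n)%:R) / (n%:R * (2 ^ r0)%:R) :> rat.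
    by rewrite !natrM; field; apply/andP; split; apply/lt0r_neq0.
  apply: divr_ge0; last by apply: ltW; apply: mulr_gt0.
  by rewrite subr_ge0 ler_nat.
have hD : t%:R * ('C(t.-1, r0)%:R * p ^+ r0.+1) <= 4 * p * (1 / n%:R).
  apply: (le_trans (y := t%:R * ((1 / 2) ^+ r0 * p))).
    by apply: ler_wpM2l => //; rewrite ler0n.
  rewrite mulrA; have -> : 4 * p * (1 / n%:R) = (4 / (n%:R : rat)) * p by rewrite mul1r mulrAC.
  by apply: ler_wpM2r => //; apply: ltW.
have -> : condprH H (fun h => Sj j h :&: T == [set x1]) (fun h => #|Sj j h :&: T| == 1%N)
        = a x1 / Bn%:R.
  rewrite /condprH /prH.
  have -> : [set i | (Sj j (H i) :&: T == [set x1]) && (#|Sj j (H i) :&: T| == 1%N)]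
          = [set j0 | SV V (H j0) :&: T == [set x1]].
    apply/setP => i; rewrite !inE ESj; case: eqP => //= ->; by rewrite cards1.
  have hB : (0 : rat) < Bn%:R by apply: lt_le_trans a1B; apply: lt_le_trans Lp; apply: mulr_gt0 => //; apply: divr_gt0.
  rewrite /a; field; apply/andP; split; apply/lt0r_neq0 => //.
have -> : 8 / (n%:R : rat) = 8 * (1 / n%:R) by rewrite mul1r.
apply: (final_alg hNr _ hp _ Lp L2 Bup hD a1B).
  by rewrite div1r invr_gt0.
by rewrite ler0n.
Qed.
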